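(* Let $n\ge2$ be an integer, $x_0,t_0\in\mathbb{R}$, $\beta>0$, $\lambda>0$, $\psi(t,x)=(x-x_0)^2-\beta(t-t_0)^2$, $\ell=\lambda\psi$, and let $w\in C^\infty(\mathbb{R}^2;\mathbb{R})$. With $I_2(w)$ as defined in the context, there exist expressions $A,B$, each a finite sum of terms of the form $c\,\ell_x^{\,a}\ell_{xx}^{\,b}\,\partial_x^{i}u_1\,\partial_x^{j}u_2$ with $u_1,u_2\in\{w,\partial_t w\}$, such that pointwise $$\partial_t w\; I_2(w)=\partial_t A+\partial_x B+\sum_{(r,s,m)\in D_C}d_C(r,s,m)\,\ell_x^{\,r}\ell_{xx}^{\,s}\,\partial_x^m\partial_t w\,\partial_x^{m+1}w,$$ where $D_C=\{(r,s,m)\in\mathbb{Z}_{\ge0}^3:\ r+2s+2m+1=n,\ s\ge3,\ s\text{ odd}\}$ and $$d_C(r,s,m)=(-1)^{n+m}\frac{(s-1)(2m+s)(n-2m-s-1)}{2(m+s)}\binom{n}{2m+s+1}\binom{m+s}{s}\prod_{j=1}^{s-1}(r+j).$$ In particular, if $n\le 6$ then $\partial_t w\,I_2(w)=\partial_tA+\partial_xB$.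
   Context: $\binom{j}{k}$ denotes the binomial coefficient (zero unless $0\le k\le j$). $$I_2(w)=\sum_{\substack{k\in[0,n]\\ k\ \text{even}}}\binom{n}{k}(-1)^{n-k}\ell_x^{\,n-k}\partial_x^k w-\binom{n}{2}\ell_{xx}\sum_{\substack{j\in[0,n-2]\\ j\ \text{odd}}}\binom{n-2}{j}(-1)^{n-2-j}\ell_x^{\,n-2-j}\partial_x^j w.$$ *)

(* Defs.v *)
From Stdlib Require Import Reals Arith List.
From Coquelicot Require Import Coquelicot.
Open Scope R_scope.

Definition dx (f : R -> R -> R) : R -> R -> R :=
  fun t x => Derive (fun y => f t y) x.
Definition dt (f : R -> R -> R) : R -> R -> R :=
  fun t x => Derive (fun s => f s x) t.

Fixpoint dxn (k : nat) (f : R -> R -> R) : R -> R -> R :=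
  match k with O => f | S k' => dx (dxn k' f) end.

Fixpoint pd (l : list bool) (f : R -> R -> R) : R -> R -> R :=
  match l with
  | nil => f
  | b :: l' => if b then dt (pd l' f) else dx (pd l' f)
  end.

Definition smooth2 (f : R -> R -> R) : Prop :=
  forall (l : list bool) (t x : R),
    ex_derive (fun s => pd l f s x) t /\
    ex_derive (fun y => pd l f t y) x /\
    continuous (fun p : R * R => pd l f (fst p) (snd p)) (t, x).

Definition psi (x0 t0 beta : R) : R -> R -> R :=
  fun t x => (x - x0) ^ 2 - beta * (t - t0) ^ 2.
Definition ell (x0 t0 beta lam : R) : R -> R -> R :=
  fun t x => lam * psi x0 t0 beta t x.
Definition lx (x0 t0 beta lam : R) := dx (ell x0 t0 beta lam).
Definition lxx (x0 t0 beta lam : R) := dx (dx (ell x0 t0 beta lam)).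

Definition binom (j k : nat) : R := if (k <=? j)%nat then Binomial.C j k else 0.

Definition I2 (n : nat) (x0 t0 beta lam : R) (w : R -> R -> R) (t x : R) : R :=
  sum_f_R0 (fun k => if Nat.even k then
      binom n k * (-1) ^ (n - k) * (lx x0 t0 beta lam t x) ^ (n - k) * dxn k w t x
    else 0) n
  - binom n 2 * lxx x0 t0 beta lam t x *
    sum_f_R0 (fun j => if Nat.odd j then
      binom (n - 2) j * (-1) ^ (n - 2 - j) * (lx x0 t0 beta lam t x) ^ (n - 2 - j)
        * dxn j w t x
    else 0) (n - 2).

(* A term  c * ell_x^a * ell_xx^b * d_x^i u1 * d_x^j u2,  u1,u2 in {w, d_t w}
   (false = w, true = d_t w). *)
Record term := mkTerm
  { tc : R; ta : nat; tb : nat; ti : nat; tj : nat; tu1 : bool; tu2 : bool }.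

Definition selw (w : R -> R -> R) (u : bool) : R -> R -> R :=
  if u then dt w else w.

Definition eval_term (x0 t0 beta lam : R) (w : R -> R -> R) (T : term) (t x : R) : R :=
  tc T * (lx x0 t0 beta lam t x) ^ (ta T) * (lxx x0 t0 beta lam t x) ^ (tb T)
    * dxn (ti T) (selw w (tu1 T)) t x * dxn (tj T) (selw w (tu2 T)) t x.

Definition eval_expr (x0 t0 beta lam : R) (w : R -> R -> R) (A : list term) (t x : R) : R :=
  fold_right (fun T acc => eval_term x0 t0 beta lam w T t x + acc) 0 A.

Definition rising (r s : nat) : R :=
  fold_right (fun j acc => (INR r + INR j) * acc) 1 (seq 1 (s - 1)).

Definition dC (n r s m : nat) : R :=
  (-1) ^ (n + m) *
  ((INR s - 1) * INR (2 * m + s) * (INR n - 2 * INR m - INR s - 1))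
    / (2 * INR (m + s))
  * binom n (2 * m + s + 1) * binom (m + s) s * rising r s.

Definition inDC (n r s m : nat) : bool :=
  ((r + 2 * s + 2 * m + 1 =? n)%nat && (3 <=? s)%nat && Nat.odd s)%bool.

(* sum over D_C (every element of D_C has r,s,m <= n) *)
Definition sumDC (n : nat) (F : nat -> nat -> nat -> R) : R :=
  sum_f_R0 (fun r => sum_f_R0 (fun s => sum_f_R0 (fun m =>
    if inDC n r s m then F r s m else 0) n) n) n.

(* Main.v *)
Require Import Defs.
From Stdlib Require Import Reals Arith List Lia Lra.
From Coquelicot Require Import Coquelicot.
Open Scope R_scope.

Lemma lx_eq x0 t0 beta lam t x : lx x0 t0 beta lam t x = 2*lam*(x-x0).
Proof. unfold lx, dx, ell, psi. apply is_derive_unique. auto_derive; [trivial|ring]. Qed.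

Lemma lxx_eq x0 t0 beta lam t x : lxx x0 t0 beta lam t x = 2*lam.
Proof. unfold lxx. unfold dx at 1.
  rewrite (Derive_ext _ (fun y => 2*lam*(y-x0))).
  2:{ intro y. apply lx_eq. }
  apply is_derive_unique. auto_derive; [trivial|ring]. Qed.

Lemma dxn_pd (w : R -> R -> R) l i : dxn i (pd l w) = pd (repeat false i ++ l) w.
Proof. induction i; simpl; [reflexivity| rewrite IHi; reflexivity]. Qed.

Lemma dxn_w_pd (w : R -> R -> R) i : dxn i w = pd (repeat false i) w.
Proof. rewrite <- (app_nil_r (repeat false i)). apply (dxn_pd w nil i). Qed.

Lemma dxn_sel_pd (w : R -> R -> R) i u : exists l, dxn i (selw w u) = pd l w.
Proof. destruct u; simpl.
  - exists (repeat false i ++ true :: nil). apply (dxn_pd w (true::nil) i).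
  - exists (repeat false i). apply dxn_w_pd. Qed.

Lemma locally_2d_all (P : R -> R -> Prop) x y : (forall u v, P u v) -> locally_2d P x y.
Proof. intro H. exists (mkposreal 1 Rlt_0_1). intros; apply H. Qed.

Lemma cont_pd w l t x : smooth2 w -> continuity_2d_pt (pd l w) t x.
Proof. intro Hw. apply continuity_2d_pt_filterlim. apply (proj2 (proj2 (Hw l t x))). Qed.

Lemma schwarz_dxn w (Hw : smooth2 w) i t x :
  Derive (fun s => dxn i w s x) t = dxn i (dt w) t x.
Proof.
  revert t x. induction i; intros t x.
  - reflexivity.
  - simpl. unfold dx at 2.
    rewrite (Derive_ext (fun y => dxn i (dt w) t y) (fun y => Derive (fun s => dxn i w s y) t)).
    2:{ intro y. symmetry. apply IHi. }
    unfold dx. 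
    rewrite (dxn_w_pd w i).
    set (L := repeat false i).
    clearbody L. pose proof (Schwarz (pd L w) t x) as HS. apply HS.
    + apply locally_2d_all. intros u v. split; [|split; [|split]].
      * exact (proj1 (Hw L u v)).
      * exact (proj1 (proj2 (Hw L u v))).
      * exact (proj1 (Hw (false :: L) u v)).
      * exact (proj1 (proj2 (Hw (true :: L) u v))).
    + exact (cont_pd w (true :: false :: L) t x Hw).
    + exact (cont_pd w (false :: true :: L) t x Hw).
Qed.

Lemma exd_t_pd w (Hw : smooth2 w) i u t x : ex_derive (fun s => dxn i (selw w u) s x) t.
Proof. destruct (dxn_sel_pd w i u) as [l Hl]. rewrite Hl. exact (proj1 (Hw l t x)). Qed.
Lemma exd_x_pd w (Hw : smooth2 w) i u t x : ex_derive (fun y => dxn i (selw w u) t y) x.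
Proof. destruct (dxn_sel_pd w i u) as [l Hl]. rewrite Hl. exact (proj1 (proj2 (Hw l t x))). Qed.

Lemma exd_t_term x0 t0 beta lam w (Hw : smooth2 w) T t x :
  ex_derive (fun s => eval_term x0 t0 beta lam w T s x) t.
Proof.
  unfold eval_term.
  apply ex_derive_mult; [apply ex_derive_mult; [apply ex_derive_mult; [apply ex_derive_mult|]|]|].
  - apply ex_derive_const.
  - apply ex_derive_pow. apply (ex_derive_ext (fun _ => 2*lam*(x-x0))).
    + intro; symmetry; apply lx_eq.
    + apply ex_derive_const.
  - apply ex_derive_pow. apply (ex_derive_ext (fun _ => 2*lam)).
    + intro; symmetry; apply lxx_eq.
    + apply ex_derive_const.
  - apply exd_t_pd; auto.
  - apply exd_t_pd; auto.
Qed.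

Lemma exd_x_term x0 t0 beta lam w (Hw : smooth2 w) T t x :
  ex_derive (fun y => eval_term x0 t0 beta lam w T t y) x.
Proof.
  unfold eval_term.
  apply ex_derive_mult; [apply ex_derive_mult; [apply ex_derive_mult; [apply ex_derive_mult|]|]|].
  - apply ex_derive_const.
  - apply ex_derive_pow. apply (ex_derive_ext (fun y => 2*lam*(y-x0))).
    + intro; symmetry; apply lx_eq.
    + auto_derive. trivial.
  - apply ex_derive_pow. apply (ex_derive_ext (fun _ => 2*lam)).
    + intro; symmetry; apply lxx_eq.
    + apply ex_derive_const.
  - apply exd_x_pd; auto.
  - apply exd_x_pd; auto.
Qed.

Lemma exd_t_ev x0 t0 beta lam w (Hw : smooth2 w) A t x :
  ex_derive (fun s => eval_expr x0 t0 beta lam w A s x) t.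
Proof.
  induction A as [|T A IH]; simpl.
  - apply ex_derive_const.
  - apply (ex_derive_plus (fun s => eval_term x0 t0 beta lam w T s x) (fun s => eval_expr x0 t0 beta lam w A s x)); [apply exd_t_term; auto | exact IH].
Qed.

Lemma exd_x_ev x0 t0 beta lam w (Hw : smooth2 w) A t x :
  ex_derive (fun y => eval_expr x0 t0 beta lam w A t y) x.
Proof.
  induction A as [|T A IH]; simpl.
  - apply ex_derive_const.
  - apply (ex_derive_plus (fun y => eval_term x0 t0 beta lam w T t y) (fun y => eval_expr x0 t0 beta lam w A t y)); [apply exd_x_term; auto | exact IH].
Qed.

Lemma ev_app x0 t0 beta lam w A A' t x :
  eval_expr x0 t0 beta lam w (A ++ A') t x =
  eval_expr x0 t0 beta lam w A t x + eval_expr x0 t0 beta lam w A' t x.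
Proof.
  induction A as [|T A IH]; simpl; [ring| rewrite IH; ring].
Qed.

Definition scale (c : R) (A : list term) : list term :=
  map (fun T => mkTerm (c * tc T) (ta T) (tb T) (ti T) (tj T) (tu1 T) (tu2 T)) A.

Lemma ev_scale x0 t0 beta lam w c A t x :
  eval_expr x0 t0 beta lam w (scale c A) t x = c * eval_expr x0 t0 beta lam w A t x.
Proof.
  induction A as [|T A IH]; simpl; [ring| rewrite IH; unfold eval_term; simpl; ring].
Qed.

Lemma Dplus_t x0 t0 beta lam w (Hw : smooth2 w) A A' t x :
  Derive (fun s => eval_expr x0 t0 beta lam w A s x + eval_expr x0 t0 beta lam w A' s x) t
  = Derive (fun s => eval_expr x0 t0 beta lam w A s x) t + Derive (fun s => eval_expr x0 t0 beta lam w A' s x) t.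
Proof. apply (Derive_plus (fun s => eval_expr x0 t0 beta lam w A s x) (fun s => eval_expr x0 t0 beta lam w A' s x)); apply exd_t_ev; auto. Qed.
Lemma Dplus_x x0 t0 beta lam w (Hw : smooth2 w) A A' t x :
  Derive (fun y => eval_expr x0 t0 beta lam w A t y + eval_expr x0 t0 beta lam w A' t y) x
  = Derive (fun y => eval_expr x0 t0 beta lam w A t y) x + Derive (fun y => eval_expr x0 t0 beta lam w A' t y) x.
Proof. apply (Derive_plus (fun y => eval_expr x0 t0 beta lam w A t y) (fun y => eval_expr x0 t0 beta lam w A' t y)); apply exd_x_ev; auto. Qed.

Definition Eqv x0 t0 beta lam w (F G : R -> R -> R) : Prop :=
  exists A B : list term, forall t x,
    F t x = Derive (fun s => eval_expr x0 t0 beta lam w A s x) t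
          + Derive (fun y => eval_expr x0 t0 beta lam w B t y) x + G t x.

Lemma Eqv_refl x0 t0 beta lam w F : Eqv x0 t0 beta lam w F F.
Proof.
  exists nil, nil. intros t x. simpl. rewrite !Derive_const. ring.
Qed.

Lemma Eqv_ext x0 t0 beta lam w F G F' G' :
  Eqv x0 t0 beta lam w F G -> (forall t x, F' t x = F t x) -> (forall t x, G t x = G' t x) ->
  Eqv x0 t0 beta lam w F' G'.
Proof.
  intros [A [B H]] H1 H2. exists A, B. intros t x. rewrite H1, H, H2. ring.
Qed.

Lemma Eqv_trans x0 t0 beta lam w (Hw : smooth2 w) F G H :
  Eqv x0 t0 beta lam w F G -> Eqv x0 t0 beta lam w G H -> Eqv x0 t0 beta lam w F H.
Proof.
  intros [A [B H1]] [A' [B' H2]]. exists (A ++ A'), (B ++ B'). intros t x.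
  rewrite H1, H2.
  rewrite (Derive_ext (fun s => eval_expr x0 t0 beta lam w (A ++ A') s x)
     (fun s => eval_expr x0 t0 beta lam w A s x + eval_expr x0 t0 beta lam w A' s x))
     by (intro; apply ev_app).
  rewrite (Derive_ext (fun y => eval_expr x0 t0 beta lam w (B ++ B') t y)
     (fun y => eval_expr x0 t0 beta lam w B t y + eval_expr x0 t0 beta lam w B' t y))
     by (intro; apply ev_app).
  rewrite Dplus_t, Dplus_x by auto.
  ring.
Qed.

Lemma Eqv_plus x0 t0 beta lam w (Hw : smooth2 w) F G F' G' :
  Eqv x0 t0 beta lam w F G -> Eqv x0 t0 beta lam w F' G' ->
  Eqv x0 t0 beta lam w (fun t x => F t x + F' t x) (fun t x => G t x + G' t x).
Proof.
  intros [A [B H1]] [A' [B' H2]]. exists (A ++ A'), (B ++ B'). intros t x.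
  rewrite H1, H2.
  rewrite (Derive_ext (fun s => eval_expr x0 t0 beta lam w (A ++ A') s x)
     (fun s => eval_expr x0 t0 beta lam w A s x + eval_expr x0 t0 beta lam w A' s x))
     by (intro; apply ev_app).
  rewrite (Derive_ext (fun y => eval_expr x0 t0 beta lam w (B ++ B') t y)
     (fun y => eval_expr x0 t0 beta lam w B t y + eval_expr x0 t0 beta lam w B' t y))
     by (intro; apply ev_app).
  rewrite Dplus_t, Dplus_x by auto.
  ring.
Qed.

Lemma Eqv_scal x0 t0 beta lam w c F G :
  Eqv x0 t0 beta lam w F G ->
  Eqv x0 t0 beta lam w (fun t x => c * F t x) (fun t x => c * G t x).
Proof.
  intros [A [B H1]]. exists (scale c A), (scale c B). intros t x.
  rewrite H1.
  rewrite (Derive_ext (fun s => eval_expr x0 t0 beta lam w (scale c A) s x)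
     (fun s => c * eval_expr x0 t0 beta lam w A s x)) by (intro; apply ev_scale).
  rewrite (Derive_ext (fun y => eval_expr x0 t0 beta lam w (scale c B) t y)
     (fun y => c * eval_expr x0 t0 beta lam w B t y)) by (intro; apply ev_scale).
  rewrite (Derive_scal (fun s => eval_expr x0 t0 beta lam w A s x)), (Derive_scal (fun y => eval_expr x0 t0 beta lam w B t y)). ring.
Qed.

Lemma Eqv_sum x0 t0 beta lam w (Hw : smooth2 w) (F G : nat -> R -> R -> R) N :
  (forall k, (k <= N)%nat -> Eqv x0 t0 beta lam w (F k) (G k)) ->
  Eqv x0 t0 beta lam w (fun t x => sum_f_R0 (fun k => F k t x) N)
                       (fun t x => sum_f_R0 (fun k => G k t x) N).
Proof.
  induction N; intro H; simpl.
  - apply H; lia.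
  - apply Eqv_plus; auto.
Qed.

Definition vw x0 t0 beta lam (w : R -> R -> R) (a b i j : nat) (t x : R) : R :=
  lx x0 t0 beta lam t x ^ a * lxx x0 t0 beta lam t x ^ b * dxn i (dt w) t x * dxn j w t x.

Lemma M1 x0 t0 beta lam w (Hw : smooth2 w) a b i :
  Eqv x0 t0 beta lam w (vw x0 t0 beta lam w a b i i) (fun _ _ => 0).
Proof.
  exists (mkTerm (/2) a b i i false false :: nil), nil. intros t x.
  simpl. rewrite Derive_const.
  rewrite (Derive_ext _ (fun s => (/2 * (2*lam*(x-x0))^a * (2*lam)^b) * (dxn i w s x * dxn i w s x))).
  2:{ intro s. unfold eval_term; simpl. rewrite lx_eq, lxx_eq. ring. }
  rewrite (Derive_scal (fun s => dxn i w s x * dxn i w s x)).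
  rewrite (Derive_mult (fun s => dxn i w s x) (fun s => dxn i w s x)) by (apply (exd_t_pd w Hw i false)).
  rewrite schwarz_dxn by auto.
  unfold vw. rewrite lx_eq, lxx_eq. rewrite !Rplus_0_r. field.
Qed.

Lemma M2 x0 t0 beta lam w (Hw : smooth2 w) a b i j :
  Eqv x0 t0 beta lam w (vw x0 t0 beta lam w a b i (S j))
    (fun t x => - (INR a * vw x0 t0 beta lam w (a-1) (S b) i j t x) - vw x0 t0 beta lam w a b (S i) j t x).
Proof.
  exists nil, (mkTerm 1 a b i j true false :: nil). intros t x.
  simpl. rewrite Derive_const.
  rewrite (Derive_ext _ (fun y => (2*lam*(y-x0))^a * ((2*lam)^b * (dxn i (dt w) t y * dxn j w t y)))).
  2:{ intro y. unfold eval_term; simpl. rewrite lx_eq, lxx_eq. ring. }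
  rewrite (Derive_mult (fun y => (2*lam*(y-x0))^a) (fun y => (2*lam)^b * (dxn i (dt w) t y * dxn j w t y))).
  2:{ auto_derive; trivial. }
  2:{ apply (ex_derive_scal (fun y => dxn i (dt w) t y * dxn j w t y)).
      apply (ex_derive_mult (fun y => dxn i (dt w) t y) (fun y => dxn j w t y)).
      - apply (exd_x_pd w Hw i true).
      - apply (exd_x_pd w Hw j false). }
  rewrite (Derive_scal (fun y => dxn i (dt w) t y * dxn j w t y)).
  rewrite (Derive_mult (fun y => dxn i (dt w) t y) (fun y => dxn j w t y)).
  2: apply (exd_x_pd w Hw i true).
  2: apply (exd_x_pd w Hw j false).
  rewrite (Derive_pow (fun y => 2*lam*(y-x0))) by (auto_derive; trivial).
  replace (Derive (fun y => 2*lam*(y-x0)) x) with (2*lam) by (symmetry; apply is_derive_unique; auto_derive; [trivial|ring]).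
  change (Derive (fun y => dxn i (dt w) t y) x) with (dxn (S i) (dt w) t x).
  change (Derive (fun y => dxn j w t y) x) with (dxn (S j) w t x).
  unfold vw. rewrite !lx_eq, !lxx_eq.
  destruct a as [|a].
  - simpl. ring.
  - replace (S a - 1)%nat with a by lia. simpl pred. rewrite <- !tech_pow_Rmult. ring.
Qed.

Fixpoint ff (a q : nat) : R := match q with O => 1 | S q' => INR a * ff (a-1) q' end.
Definition qq (d m : nat) : nat := (d - 2*m - 1)%nat.
Definition Kc (d m a : nat) : R :=
  if (2*m+1 <=? d)%nat then (-1)^(m + qq d m) * binom (m + qq d m) (qq d m) * ff a (qq d m) else 0.

Lemma Kc_yes d m a q : (d = 2*m+1+q)%nat -> Kc d m a = (-1)^(m+q) * binom (m+q) q * ff a q.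
Proof. intro H. unfold Kc, qq. replace (2*m+1 <=? d)%nat with true by (symmetry; apply Nat.leb_le; lia).
  replace (d - 2*m - 1)%nat with q by lia. reflexivity. Qed.
Lemma Kc_no d m a : (d < 2*m+1)%nat -> Kc d m a = 0.
Proof. intro H. unfold Kc. replace (2*m+1 <=? d)%nat with false by (symmetry; apply Nat.leb_gt; lia). reflexivity. Qed.
Lemma qq_eq d m q : (d = 2*m+1+q)%nat -> qq d m = q.
Proof. unfold qq; lia. Qed.
Lemma binom_C j k : (k <= j)%nat -> binom j k = Binomial.C j k.
Proof. intro H. unfold binom. replace (k <=? j)%nat with true by (symmetry; apply Nat.leb_le; lia). reflexivity. Qed.
Lemma C_nn n : Binomial.C n n = 1.
Proof. unfold Binomial.C. rewrite Nat.sub_diag. simpl. field. apply INR_fact_neq_0. Qed.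
Lemma C_n0 n : Binomial.C n 0 = 1.
Proof. unfold Binomial.C. rewrite Nat.sub_0_r. simpl. field. apply INR_fact_neq_0. Qed.

Lemma Kpt (V : nat -> nat -> nat -> nat -> R) d m i a b :
  -INR a * (Kc (S d) m (a-1) * V (a-1 - qq (S d) m)%nat (S b + qq (S d) m)%nat (i+m)%nat (i+m+1)%nat)
  - (match m with O => 0 | S m' => Kc d m' a * V (a - qq d m')%nat (b + qq d m')%nat (S i + m')%nat (S i + m' + 1)%nat end)
  = Kc (S (S d)) m a * V (a - qq (S (S d)) m)%nat (b + qq (S (S d)) m)%nat (i+m)%nat (i+m+1)%nat.
Proof.
  destruct (le_lt_dec (2*m+1) (S (S d))) as [H1|H1].
  - destruct (Nat.eq_dec (2*m+1) (S (S d))) as [H2|H2].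
    +
      destruct m as [|m']; [lia|].
      rewrite (Kc_no (S d)) by lia.
      rewrite (Kc_yes d m' a 0) by lia. rewrite (qq_eq d m' 0) by lia.
      rewrite (Kc_yes (S (S d)) (S m') a 0) by lia. rewrite (qq_eq (S (S d)) (S m') 0) by lia.
      rewrite !Nat.add_0_r, !Nat.sub_0_r. rewrite !binom_C by lia. rewrite !C_n0.
      replace (S i + m')%nat with (i + S m')%nat by lia. simpl pow. ring.
      assert (exists p, d = (2*m + p)%nat) as [p Hp] by (exists (d - 2*m)%nat; lia).
      subst d.
      rewrite (Kc_yes (S (2*m+p)) m (a-1) p) by lia. rewrite (qq_eq (S (2*m+p)) m p) by lia.
      rewrite (Kc_yes (S (S (2*m+p))) m a (S p)) by lia. rewrite (qq_eq (S (S (2*m+p))) m (S p)) by lia.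
      replace (a - 1 - p)%nat with (a - S p)%nat by lia.
      replace (S b + p)%nat with (b + S p)%nat by lia.
      destruct m as [|m'].
      * simpl Nat.add. rewrite !binom_C by lia. rewrite !C_nn. simpl ff. simpl pow. ring.
      * rewrite (Kc_yes (2 * S m' + p) m' a (S p)) by lia. rewrite (qq_eq (2 * S m' + p) m' (S p)) by lia.
        replace (S i + m')%nat with (i + S m')%nat by lia.
        rewrite !binom_C by lia.
        replace (S m' + S p)%nat with (S (m' + S p))%nat by lia.
        rewrite <- pascal by lia.
        replace (S m' + p)%nat with (m' + S p)%nat by lia.
        simpl ff. simpl pow. ring.
  - rewrite (Kc_no (S d)) by lia. rewrite (Kc_no (S (S d))) by lia.
    destruct m as [|m']; [lia|]. rewrite (Kc_no d) by lia. ring.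
Qed.

Definition Kterm x0 t0 beta lam w d i a b m t x :=
  Kc d m a * vw x0 t0 beta lam w (a - qq d m) (b + qq d m) (i+m) (i+m+1) t x.

Lemma sum_shift f N : f N = 0 ->
  sum_f_R0 f N = sum_f_R0 (fun m => match m with O => 0 | S m' => f m' end) N.
Proof.
  intro H. destruct N as [|N].
  - simpl. exact H.
  - rewrite tech5, H, Rplus_0_r. rewrite (decomp_sum _ (S N)) by (apply Nat.lt_0_succ). simpl pred. rewrite Rplus_0_l. reflexivity.
Qed.

Lemma sum_first f N : (forall m, (1 <= m)%nat -> f m = 0) -> sum_f_R0 f N = f O.
Proof.
  intro H. induction N; [reflexivity|]. rewrite tech5, IHN, (H (S N)) by lia. ring.
Qed.

Lemma Kred x0 t0 beta lam w (Hw : smooth2 w) d : forall N i a b, (d <= N)%nat ->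
  Eqv x0 t0 beta lam w (vw x0 t0 beta lam w a b i (i+d))
    (fun t x => sum_f_R0 (fun m => Kterm x0 t0 beta lam w d i a b m t x) N).
Proof.
  assert (forall d, (forall N i a b, (d <= N)%nat ->
  Eqv x0 t0 beta lam w (vw x0 t0 beta lam w a b i (i+d))
    (fun t x => sum_f_R0 (fun m => Kterm x0 t0 beta lam w d i a b m t x) N)) /\
    (forall N i a b, (S d <= N)%nat ->
  Eqv x0 t0 beta lam w (vw x0 t0 beta lam w a b i (i+ S d))
    (fun t x => sum_f_R0 (fun m => Kterm x0 t0 beta lam w (S d) i a b m t x) N))) as Hall.
  2:{ apply Hall. }
  clear d. intro d. induction d as [|d [IH0 IH1]].
  - split.
    + intros N i a b _. eapply Eqv_ext. apply (M1 x0 t0 beta lam w Hw a b i).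
      * intros; rewrite Nat.add_0_r; reflexivity.
      * intros t x. symmetry. apply sum_eq_R0. intros m _. unfold Kterm. rewrite Kc_no by lia. ring.
    + intros N i a b _. eapply Eqv_ext. apply Eqv_refl.
      * intros; reflexivity.
      * intros t x. rewrite sum_first.
        -- unfold Kterm. rewrite (Kc_yes 1 0 a 0) by lia. rewrite (qq_eq 1 0 0) by lia.
           rewrite binom_C by lia. rewrite C_n0. simpl ff.
           rewrite !Nat.add_0_r, Nat.sub_0_r. simpl. ring.
        -- intros m Hm. unfold Kterm. rewrite Kc_no by lia. ring.
  - split; [exact IH1|].
    intros N i a b HN.
    eapply Eqv_trans; [exact Hw| |].
    { eapply Eqv_ext. apply (M2 x0 t0 beta lam w Hw a b i (i + S d)).
      - intros; rewrite Nat.add_succ_r; reflexivity.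
      - intros; reflexivity. }
    eapply Eqv_ext.
    { apply Eqv_plus; [exact Hw| |].
      - apply (Eqv_scal _ _ _ _ _ (- INR a)). apply (IH1 N i (a-1)%nat (S b)). lia.
      - apply (Eqv_scal _ _ _ _ _ (-1)). apply (IH0 N (S i) a b). lia. }
    + intros t x. replace (S i + d)%nat with (i + S d)%nat by lia. ring.
    + intros t x. cbv beta.
      rewrite (sum_shift (fun m => Kterm x0 t0 beta lam w d (S i) a b m t x)).
      2:{ unfold Kterm. rewrite Kc_no by lia. ring. }
      rewrite !scal_sum, <- sum_plus. apply sum_eq. intros m _.
      unfold Kterm.
      rewrite <- (Kpt (fun a b i j => vw x0 t0 beta lam w a b i j t x) d m i a b).
      destruct m; ring.
Qed.

Lemma sum_swap (F : nat -> nat -> R) N M :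
  sum_f_R0 (fun i => sum_f_R0 (fun j => F i j) M) N = sum_f_R0 (fun j => sum_f_R0 (fun i => F i j) N) M.
Proof.
  induction N as [|N IH]; simpl.
  - reflexivity.
  - rewrite IH. rewrite <- sum_plus. reflexivity.
Qed.

Lemma sum_reindex (f : nat -> R) N c : (forall k, (k < c)%nat -> f k = 0) ->
  sum_f_R0 f N = sum_f_R0 (fun s => if (s + c <=? N)%nat then f (s + c)%nat else 0) N.
Proof.
  revert f. induction c as [|c IH]; intros f Hf.
  - apply sum_eq. intros i Hi. rewrite Nat.add_0_r.
    replace (i <=? N)%nat with true by (symmetry; apply Nat.leb_le; lia). reflexivity.
  - rewrite (IH f) by (intros; apply Hf; lia).
    destruct N as [|N].
    + simpl. replace (0 + c <=? 0)%nat with (c =? 0)%nat by (destruct c; reflexivity).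
      destruct c; simpl.
      * rewrite Hf by lia. reflexivity.
      * reflexivity.
    + rewrite (decomp_sum _ (S N)) by (apply Nat.lt_0_succ). simpl pred.
      rewrite (tech5 _ N).
      replace (S N + S c <=? S N)%nat with false by (symmetry; apply Nat.leb_gt; lia).
      assert (H0 : (if (0 + c <=? S N)%nat then f (0 + c)%nat else 0) = 0).
      { destruct (0 + c <=? S N)%nat; [apply Hf; lia | reflexivity]. }
      rewrite H0. rewrite Rplus_0_l, Rplus_0_r.
      apply sum_eq. intros i Hi.
      replace (S i + c)%nat with (i + S c)%nat by lia. reflexivity.
Qed.

Lemma sum_extend (f : nat -> R) M N : (M <= N)%nat ->
  (forall k, (M < k)%nat -> (k <= N)%nat -> f k = 0) -> sum_f_R0 f N = sum_f_R0 f M.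
Proof.
  intros HMN Hf. induction N as [|N IH].
  - replace M with 0%nat by lia. reflexivity.
  - destruct (Nat.eq_dec M (S N)) as [E|E].
    + subst. reflexivity.
    + rewrite tech5, IH by (try lia; intros; apply Hf; lia). rewrite (Hf (S N)) by lia. apply Rplus_0_r.
Qed.

Lemma sum_pick (G : nat -> R) N r0 :
  sum_f_R0 (fun r => if (r =? r0)%nat then G r else 0) N = if (r0 <=? N)%nat then G r0 else 0.
Proof.
  induction N as [|N IH].
  - simpl. destruct r0; reflexivity.
  - rewrite tech5, IH. destruct (Nat.eq_dec r0 (S N)) as [E|E].
    + subst. rewrite Nat.eqb_refl.
      replace (S N <=? N)%nat with false by (symmetry; apply Nat.leb_gt; lia).
      replace (S N <=? S N)%nat with true by (symmetry; apply Nat.leb_le; lia). ring.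
    + replace (S N =? r0)%nat with false by (symmetry; apply Nat.eqb_neq; lia).
      destruct (le_lt_dec r0 N).
      * replace (r0 <=? N)%nat with true by (symmetry; apply Nat.leb_le; lia).
        replace (r0 <=? S N)%nat with true by (symmetry; apply Nat.leb_le; lia). ring.
      * replace (r0 <=? N)%nat with false by (symmetry; apply Nat.leb_gt; lia).
        replace (r0 <=? S N)%nat with false by (symmetry; apply Nat.leb_gt; lia). ring.
Qed.

Lemma ff_zero q : forall a, (a < q)%nat -> ff a q = 0.
Proof.
  induction q as [|q IH]; intros a H; [lia|].
  simpl. destruct a as [|a].
  - simpl. ring.
  - rewrite IH by lia. ring.
Qed.

Lemma fold_prod (g : nat -> R) z l :
  fold_right (fun j acc => g j * acc) z l = fold_right (fun j acc => g j * acc) 1 l * z.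
Proof. induction l as [|x l IH]; simpl; [ring| rewrite IH; ring]. Qed.

Lemma rising_ff r q : rising r (S q) = ff (r+q) q.
Proof.
  unfold rising. replace (S q - 1)%nat with q by lia.
  induction q as [|q IH].
  - reflexivity.
  - rewrite seq_S, fold_right_app. cbn [fold_right].
    rewrite fold_prod, IH.
    change (ff (r + S q) (S q)) with (INR (r + S q) * ff (r + S q - 1) q).
    replace (r + S q - 1)%nat with (r + q)%nat by lia.
    replace (1 + q)%nat with (S q) by lia.
    rewrite !plus_INR. rewrite S_INR. ring.
Qed.

Lemma L1 e j : Binomial.C (j + 2 + e) 2 * Binomial.C (j + e) j =
  Binomial.C (j+2+e) (S j) * INR (S j) * INR (S e) / 2.
Proof.
  unfold Binomial.C.
  replace (j + 2 + e - 2)%nat with (j + e)%nat by lia.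
  replace (j + e - j)%nat with e by lia.
  replace (j + 2 + e - S j)%nat with (S e) by lia.
  replace (INR (fact 2)) with 2 by (simpl; ring).
  rewrite !fact_simpl. rewrite !mult_INR.
  field. repeat split; try apply INR_fact_neq_0; apply not_0_INR; lia.
Qed.

Lemma L2 m p : Binomial.C (m + p) p = Binomial.C (S (m + p)) (S p) * INR (S p) / INR (S (m + p)).
Proof.
  unfold Binomial.C.
  replace (m + p - p)%nat with m by lia.
  replace (S (m + p) - S p)%nat with m by lia.
  rewrite !fact_simpl. rewrite !mult_INR.
  field. repeat split; try apply INR_fact_neq_0; apply not_0_INR; lia.
Qed.

Lemma sgn a b c : (-1)^(a + 2*b + c) = (-1)^a * (-1)^c.
Proof. rewrite !pow_add, pow_mult. replace ((-1)^2) with 1 by ring. rewrite pow1. ring. Qed.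

Lemma CI r u m :
  let n := (r + 4*u + 2*m + 3)%nat in
  let s := (2*u+1)%nat in
  let k := (2*u+2*m+2)%nat in
  let j := (2*u+2*m+1)%nat in
  Binomial.C n k * (-1)^(r + 2*u + 1) * ((-1)^(m + 2*u + 1) * Binomial.C (m+s) s * ff (r+s) s)
  + - Binomial.C n 2 * Binomial.C (n-2) j * (-1)^(r + 2*u + 0)
      * ((-1)^(m + 2*u + 0) * Binomial.C (m + 2*u) (2*u) * ff (r + 2*u) (2*u))
  = (-1)^(r + 2*(2*u+m+1) + (m+1)) *
    ((INR s - 1) * INR (2 * m + s) * (INR n - 2 * INR m - INR s - 1)) / (2 * INR (m + s))
    * Binomial.C n k * Binomial.C (m + s) s * ff (r + 2*u) (2*u).
Proof.
  intros n s k j.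
  replace (- Binomial.C n 2 * Binomial.C (n-2) j) with (-(Binomial.C n 2 * Binomial.C (n-2) j)) by ring.
  rewrite !sgn.
  replace (Binomial.C n 2 * Binomial.C (n-2) j) with (Binomial.C n k * INR k * INR (r + s) / 2).
  2:{ unfold n, k, j, s.
      replace (r + 4*u + 2*m + 3)%nat with ((2*u+2*m+1) + 2 + (r + 2*u))%nat by lia.
      replace ((2*u+2*m+1) + 2 + (r + 2*u) - 2)%nat with ((2*u+2*m+1) + (r + 2*u))%nat by lia.
      rewrite L1. replace (S (2*u+2*m+1)) with (2*u+2*m+2)%nat by lia.
      replace (S (r + 2*u)) with (r + (2*u+1))%nat by lia. reflexivity. }
  replace (Binomial.C (m + 2*u) (2*u)) with (Binomial.C (m+s) s * INR s / INR (m+s)).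
  2:{ rewrite (L2 m (2*u)). unfold s. replace (S (m + 2*u)) with (m + (2*u+1))%nat by lia.
      replace (S (2*u)) with (2*u+1)%nat by lia. reflexivity. }
  replace (ff (r+s) s) with (INR (r+s) * ff (r + 2*u) (2*u)).
  2:{ unfold s. replace (2*u+1)%nat with (S (2*u)) by lia.
      change (ff (r + S (2*u)) (S (2*u))) with (INR (r + S (2*u)) * ff (r + S (2*u) - 1) (2*u)).
      replace (r + S (2*u) - 1)%nat with (r + 2*u)%nat by lia. reflexivity. }
  unfold n, k, s. rewrite !plus_INR, !mult_INR. simpl (INR 1). simpl (INR 2). simpl (INR 3). simpl (INR 4).
  rewrite pow_add.
  set (B1 := Binomial.C (r + 4 * u + 2 * m + 3) (2 * u + 2 * m + 2)).
  set (B2 := Binomial.C (m + (2 * u + 1)) (2 * u + 1)).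
  set (F := ff (r + 2 * u) (2 * u)).
  set (sr := (-1)^r). set (sm := (-1)^m).
  set (R1 := INR r). set (U1 := INR u). set (M1 := INR m).
  simpl pow.
  field.
  unfold M1, U1. pose proof (pos_INR m). pose proof (pos_INR u). lra.
Qed.

Lemma CIp r u m :
  Binomial.C (r + 4*u + 2*m + 3) (2*u+1 + (2*m+1)) * (-1)^(r + (2*u+1)) *
    ((-1)^(m + (2*u+1)) * Binomial.C (m + (2*u+1)) (2*u+1) * ff (r + (2*u+1)) (2*u+1))
  + - Binomial.C (r + 4*u + 2*m + 3) 2 * Binomial.C (r + 4*u + 2*m + 3 - 2) (2*u + (2*m+1)) * (-1)^(r + 2*u) *
    ((-1)^(m + 2*u) * Binomial.C (m + 2*u) (2*u) * ff (r + 2*u) (2*u))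
  = dC (r + 4*u + 2*m + 3) r (2*u+1) m.
Proof.
  pose proof (CI r u m) as H. cbv zeta in H.
  unfold dC.
  rewrite !binom_C by lia.
  assert (HR : rising r (2*u+1) = ff (r + 2*u) (2*u))
    by (replace (2*u+1)%nat with (S (2*u)) by lia; apply rising_ff).
  rewrite HR.
  replace ((-1)^(r + (2*u+1))) with ((-1)^(r + 2*u + 1)) by (f_equal; lia).
  replace ((-1)^(m + (2*u+1))) with ((-1)^(m + 2*u + 1)) by (f_equal; lia).
  replace ((-1)^(r + 2*u)) with ((-1)^(r + 2*u + 0)) by (f_equal; lia).
  replace ((-1)^(m + 2*u)) with ((-1)^(m + 2*u + 0)) by (f_equal; lia).
  replace ((-1)^(r + 4*u + 2*m + 3 + m)) with ((-1)^(r + 2*(2*u+m+1) + (m+1))) by (f_equal; lia).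
  replace (Binomial.C (r + 4*u + 2*m + 3) (2*u+1 + (2*m+1))) with (Binomial.C (r + 4*u + 2*m + 3) (2*u+2*m+2)) by (f_equal; lia).
  replace (Binomial.C (r + 4*u + 2*m + 3) (2*m + (2*u+1) + 1)) with (Binomial.C (r + 4*u + 2*m + 3) (2*u+2*m+2)) by (f_equal; lia).
  replace (Binomial.C (r + 4*u + 2*m + 3 - 2) (2*u + (2*m+1))) with (Binomial.C (r + 4*u + 2*m + 3 - 2) (2*u+2*m+1)) by (f_equal; lia).
  exact H.
Qed.

Definition X1 n (V : nat -> nat -> nat -> R) k m : R :=
  if Nat.even k then binom n k * (-1)^(n-k) * (Kc k m (n-k) * V (n - k - qq k m)%nat (0 + qq k m)%nat m) else 0.
Definition X2 n (V : nat -> nat -> nat -> R) j m : R :=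
  if Nat.odd j then - binom n 2 * binom (n-2) j * (-1)^(n-2-j) * (Kc j m (n-2-j) * V (n-2-j - qq j m)%nat (1 + qq j m)%nat m) else 0.
Definition Y2f n V m s : R := match s with O => 0 | S q => if (q + (2*m+1) <=? n)%nat then X2 n V (q + (2*m+1)) m else 0 end.

Lemma ev2 a : Nat.even (2*a) = true.
Proof. induction a; [reflexivity|]. replace (2 * S a)%nat with (S (S (2*a))) by lia. simpl. exact IHa. Qed.
Lemma ev21 a : Nat.even (2*a+1) = false.
Proof. induction a; [reflexivity|]. replace (2 * S a + 1)%nat with (S (S (2*a+1))) by lia. simpl. exact IHa. Qed.

Lemma binom_big j k : (j < k)%nat -> binom j k = 0.
Proof. intro H. unfold binom. replace (k <=? j)%nat with false by (symmetry; apply Nat.leb_gt; lia). reflexivity. Qed.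

Lemma Ypt n V s m :
  (if (s + (2*m+1) <=? n)%nat then X1 n V (s + (2*m+1)) m else 0) + Y2f n V m s
  = if ((2*s+2*m+1 <=? n)%nat && ((3 <=? s)%nat && Nat.odd s))%bool then
      dC n (n - (2*s+2*m+1)) s m * V (n - (2*s+2*m+1))%nat s m else 0.
Proof.
  destruct (Nat.Even_or_Odd s) as [[u Hu]|[u Hu]]; subst s.
  -
    assert (E1 : X1 n V (2*u + (2*m+1)) m = 0).
    { unfold X1. replace (2*u + (2*m+1))%nat with (2*(u+m)+1)%nat by lia. rewrite ev21. reflexivity. }
    assert (E2 : Y2f n V m (2*u) = 0).
    { destruct u as [|u]; [reflexivity|].
      replace (2 * S u)%nat with (S (2*u+1)) by lia. unfold Y2f.
      destruct (2*u+1 + (2*m+1) <=? n)%nat; [|reflexivity].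
      unfold X2. unfold Nat.odd. replace (2*u+1 + (2*m+1))%nat with (2*(u+m+1))%nat by lia.
      rewrite ev2. reflexivity. }
    rewrite E2. unfold Nat.odd. rewrite ev2. rewrite Bool.andb_false_r, Bool.andb_false_r.
    destruct (2*u + (2*m+1) <=? n)%nat; [rewrite E1|]; ring.
  -
    assert (HY : Y2f n V m (2*u+1) = if (2*u + (2*m+1) <=? n)%nat then X2 n V (2*u + (2*m+1)) m else 0)
      by (replace (2*u+1)%nat with (S (2*u)) by lia; reflexivity).
    rewrite HY. clear HY.
    assert (P1 : Nat.even (2*u+1 + (2*m+1)) = true)
      by (replace (2*u+1 + (2*m+1))%nat with (2*(u+m+1))%nat by lia; apply ev2).
    assert (P2 : Nat.odd (2*u + (2*m+1)) = true)
      by (unfold Nat.odd; replace (2*u + (2*m+1))%nat with (2*(u+m)+1)%nat by lia; rewrite ev21; reflexivity).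
    assert (P3 : Nat.odd (2*u+1) = true) by (unfold Nat.odd; rewrite ev21; reflexivity).
    rewrite P3, Bool.andb_true_r.
    unfold X1, X2. rewrite P1, P2.
    rewrite (Kc_yes (2*u+1 + (2*m+1)) m _ (2*u+1)) by lia.
    rewrite (qq_eq (2*u+1 + (2*m+1)) m (2*u+1)) by lia.
    rewrite (Kc_yes (2*u + (2*m+1)) m _ (2*u)) by lia.
    rewrite (qq_eq (2*u + (2*m+1)) m (2*u)) by lia.
    destruct (le_lt_dec (2*(2*u+1)+2*m+1) n) as [Hb|Hs].
    + assert (exists r, n = (r + 4*u + 2*m + 3)%nat) as [r ->] by (exists (n - (4*u+2*m+3))%nat; lia).
      replace (2*(2*u+1)+2*m+1 <=? r + 4*u + 2*m + 3)%nat with true by (symmetry; apply Nat.leb_le; lia).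
      replace (2*u+1 + (2*m+1) <=? r + 4*u + 2*m + 3)%nat with true by (symmetry; apply Nat.leb_le; lia).
      replace (2*u + (2*m+1) <=? r + 4*u + 2*m + 3)%nat with true by (symmetry; apply Nat.leb_le; lia).
      replace (r + 4*u + 2*m + 3 - (2*u+1 + (2*m+1)))%nat with (r + (2*u+1))%nat by lia.
      replace (r + (2*u+1) - (2*u+1))%nat with r by lia.
      replace (0 + (2*u+1))%nat with (2*u+1)%nat by lia.
      replace (r + 4*u + 2*m + 3 - 2 - (2*u + (2*m+1)))%nat with (r + 2*u)%nat by lia.
      replace (r + 2*u - 2*u)%nat with r by lia.
      replace (1 + 2*u)%nat with (2*u+1)%nat by lia.
      replace (r + 4*u + 2*m + 3 - (2*(2*u+1)+2*m+1))%nat with r by lia.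
      rewrite !binom_C by lia.
      pose proof (CIp r u m) as HC.
      destruct u as [|u].
      * replace (3 <=? 2*0+1)%nat with false by reflexivity. cbn [andb].
        transitivity (dC (r + 4*0 + 2*m + 3) r (2*0+1) m * V r (2*0+1)%nat m).
        -- rewrite <- HC. ring.
        -- unfold dC. replace (INR (2*0+1) - 1) with 0 by (simpl; ring). unfold Rdiv. rewrite !Rmult_0_l. ring.
      * replace (3 <=? 2 * S u + 1)%nat with true by (symmetry; apply Nat.leb_le; lia). cbn [andb].
        rewrite <- HC. ring.
    + replace (2*(2*u+1)+2*m+1 <=? n)%nat with false by (symmetry; apply Nat.leb_gt; lia).
      simpl andb.
      rewrite (ff_zero (2*u+1) (n - (2*u+1 + (2*m+1)))) by lia.
      destruct (le_lt_dec (2*u + (2*m+1)) (n-2)) as [Hj|Hj].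
      * rewrite (ff_zero (2*u) (n - 2 - (2*u + (2*m+1)))) by lia.
        destruct (2*u+1 + (2*m+1) <=? n)%nat; destruct (2*u + (2*m+1) <=? n)%nat; ring.
      * rewrite (binom_big (n-2)) by lia.
        destruct (2*u+1 + (2*m+1) <=? n)%nat; destruct (2*u + (2*m+1) <=? n)%nat; ring.
Qed.


Lemma collapse n s m (G : nat -> R) :
  sum_f_R0 (fun r => if inDC n r s m then G r else 0) n =
  if ((2*s+2*m+1 <=? n)%nat && ((3 <=? s)%nat && Nat.odd s))%bool then G (n - (2*s+2*m+1))%nat else 0.
Proof.
  set (K := (2*s+2*m+1)%nat).
  set (H := if ((K <=? n)%nat && ((3 <=? s)%nat && Nat.odd s))%bool then G (n - K)%nat else 0).
  rewrite (sum_eq _ (fun r => if (r =? n - K)%nat then H else 0)).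
  - rewrite sum_pick. replace (n - K <=? n)%nat with true by (symmetry; apply Nat.leb_le; lia). reflexivity.
  - intros r _. unfold inDC, H.
    destruct (Nat.eq_dec (r + 2*s + 2*m + 1) n) as [E|E].
    + replace (r + 2*s + 2*m + 1 =? n)%nat with true by (symmetry; apply Nat.eqb_eq; exact E).
      replace (r =? n - K)%nat with true by (symmetry; apply Nat.eqb_eq; unfold K; lia).
      replace (K <=? n)%nat with true by (symmetry; apply Nat.leb_le; unfold K; lia).
      replace (n - K)%nat with r by (unfold K; lia).
      destruct (3 <=? s)%nat; destruct (Nat.odd s); reflexivity.
    + replace (r + 2*s + 2*m + 1 =? n)%nat with false by (symmetry; apply Nat.eqb_neq; exact E).
      destruct (r =? n - K)%nat eqn:E2; [|reflexivity].
      apply Nat.eqb_eq in E2.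
      replace (K <=? n)%nat with false by (symmetry; apply Nat.leb_gt; unfold K in *; lia).
      reflexivity.
Qed.

Lemma comb n V : (2 <= n)%nat ->
  sum_f_R0 (fun k => sum_f_R0 (fun m => X1 n V k m) n) n
  + sum_f_R0 (fun j => sum_f_R0 (fun m => X2 n V j m) n) (n-2)
  = sumDC n (fun r s m => dC n r s m * V r s m).
Proof.
  intro Hn.
  rewrite <- (sum_extend (fun j => sum_f_R0 (fun m => X2 n V j m) n) (n-2) n) by
    (first [lia | (intros k H1 H2; apply sum_eq_R0; intros m _; unfold X2;
     destruct (Nat.odd k); [rewrite (binom_big (n-2) k) by lia; ring | reflexivity])]).
  rewrite (sum_swap (fun k m => X1 n V k m) n n).
  rewrite (sum_swap (fun k m => X2 n V k m) n n).
  rewrite <- sum_plus.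
  unfold sumDC.
  rewrite (sum_swap (fun r s => sum_f_R0 (fun m => if inDC n r s m then dC n r s m * V r s m else 0) n) n n).
  rewrite (sum_eq (fun s => sum_f_R0 (fun r => sum_f_R0 (fun m => if inDC n r s m then dC n r s m * V r s m else 0) n) n)
                  (fun s => sum_f_R0 (fun m => sum_f_R0 (fun r => if inDC n r s m then dC n r s m * V r s m else 0) n) n))
    by (intros; apply sum_swap).
  rewrite (sum_swap (fun s m => sum_f_R0 (fun r => if inDC n r s m then dC n r s m * V r s m else 0) n) n n).
  apply sum_eq. intros m _.
  rewrite (sum_reindex (fun k => X1 n V k m) n (2*m+1)).
  2:{ intros k Hk. unfold X1. destruct (Nat.even k); [rewrite Kc_no by lia; ring | reflexivity]. }
  rewrite (sum_reindex (fun k => X2 n V k m) n (2*m+1)).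
  2:{ intros k Hk. unfold X2. destruct (Nat.odd k); [rewrite Kc_no by lia; ring | reflexivity]. }
  rewrite (sum_shift (fun s => if (s + (2*m+1) <=? n)%nat then X2 n V (s + (2*m+1)) m else 0) n).
  2:{ replace (n + (2*m+1) <=? n)%nat with false by (symmetry; apply Nat.leb_gt; lia). reflexivity. }
  rewrite <- sum_plus. apply sum_eq. intros s _.
  rewrite collapse.
  rewrite <- Ypt. reflexivity.
Qed.

Definition VV x0 t0 beta lam w t x (r s m : nat) : R := vw x0 t0 beta lam w r s m (m+1) t x.

Lemma mainEqv n x0 t0 beta lam w : (2 <= n)%nat -> smooth2 w ->
  Eqv x0 t0 beta lam w (fun t x => dt w t x * I2 n x0 t0 beta lam w t x)
    (fun t x => sumDC n (fun r s m =>
          dC n r s m * (lx x0 t0 beta lam t x) ^ r * (lxx x0 t0 beta lam t x) ^ s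
            * dxn m (dt w) t x * dxn (m + 1) w t x)).
Proof.
  intros Hn Hw.
  eapply Eqv_ext.
  { apply Eqv_plus; [exact Hw| |].
    - apply (Eqv_sum x0 t0 beta lam w Hw
        (fun k t x => if Nat.even k then (binom n k * (-1)^(n-k)) * vw x0 t0 beta lam w (n-k) 0 0 (0+k) t x else 0)
        (fun k t x => sum_f_R0 (fun m => X1 n (VV x0 t0 beta lam w t x) k m) n) n).
      intros k Hk. destruct (Nat.even k) eqn:Ek.
      + eapply Eqv_ext.
        * apply Eqv_scal. apply (Kred x0 t0 beta lam w Hw k n 0 (n-k) 0 Hk).
        * intros; reflexivity.
        * intros t x. cbv beta. rewrite scal_sum. apply sum_eq. intros m _.
          unfold X1, Kterm, VV. rewrite Ek. simpl Nat.add. ring.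
      + eapply Eqv_ext. apply Eqv_refl.
        * intros; reflexivity.
        * intros t x. cbv beta. symmetry. apply sum_eq_R0. intros m _. unfold X1. rewrite Ek. reflexivity.
    - apply (Eqv_sum x0 t0 beta lam w Hw
        (fun j t x => if Nat.odd j then (- binom n 2 * binom (n-2) j * (-1)^(n-2-j)) * vw x0 t0 beta lam w (n-2-j) 1 0 (0+j) t x else 0)
        (fun j t x => sum_f_R0 (fun m => X2 n (VV x0 t0 beta lam w t x) j m) n) (n-2)).
      intros j Hj. destruct (Nat.odd j) eqn:Ej.
      + eapply Eqv_ext.
        * apply Eqv_scal. apply (Kred x0 t0 beta lam w Hw j n 0 (n-2-j) 1). lia.
        * intros; reflexivity.
        * intros t x. cbv beta. rewrite scal_sum. apply sum_eq. intros m _.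
          unfold X2, Kterm, VV. rewrite Ej. simpl Nat.add. ring.
      + eapply Eqv_ext. apply Eqv_refl.
        * intros; reflexivity.
        * intros t x. cbv beta. symmetry. apply sum_eq_R0. intros m _. unfold X2. rewrite Ej. reflexivity. }
  - intros t x. cbv beta. unfold I2.
    set (S2 := sum_f_R0 (fun j => if Nat.odd j then binom (n - 2) j * (-1) ^ (n - 2 - j) *
             lx x0 t0 beta lam t x ^ (n - 2 - j) * dxn j w t x else 0) (n - 2)).
    replace (dt w t x * (sum_f_R0 (fun k => if Nat.even k then binom n k * (-1) ^ (n - k) *
             lx x0 t0 beta lam t x ^ (n - k) * dxn k w t x else 0) n - binom n 2 * lxx x0 t0 beta lam t x * S2))
      with (dt w t x * sum_f_R0 (fun k => if Nat.even k then binom n k * (-1) ^ (n - k) *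
             lx x0 t0 beta lam t x ^ (n - k) * dxn k w t x else 0) n
            + (- (dt w t x * binom n 2 * lxx x0 t0 beta lam t x)) * S2) by ring.
    unfold S2. rewrite !scal_sum.
    f_equal.
    + apply sum_eq. intros k _. destruct (Nat.even k).
      * unfold vw. simpl dxn. simpl pow. ring.
      * ring.
    + apply sum_eq. intros j _. destruct (Nat.odd j).
      * unfold vw. simpl dxn. simpl pow. ring.
      * ring.
  - intros t x. cbv beta.
    rewrite (comb n (VV x0 t0 beta lam w t x) Hn).
    unfold sumDC. apply sum_eq. intros r _. apply sum_eq. intros s _. apply sum_eq. intros m _.
    destruct (inDC n r s m); [|reflexivity]. unfold VV, vw. ring.
Qed.

Lemma sumDC_small n (F : nat -> nat -> nat -> R) : (n <= 6)%nat -> sumDC n F = 0.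
Proof.
  intro Hn. unfold sumDC. apply sum_eq_R0. intros r _. apply sum_eq_R0. intros s _. apply sum_eq_R0. intros m _.
  unfold inDC.
  destruct (r + 2 * s + 2 * m + 1 =? n)%nat eqn:E1; [|reflexivity].
  destruct (3 <=? s)%nat eqn:E2; [|reflexivity].
  apply Nat.eqb_eq in E1. apply Nat.leb_le in E2. lia.
Qed.

Theorem proposition4p1 (n : nat) (x0 t0 beta lam : R) (w : R -> R -> R) :
  (2 <= n)%nat -> 0 < beta -> 0 < lam -> smooth2 w ->
  exists A B : list term,
    (forall t x : R,
      dt w t x * I2 n x0 t0 beta lam w t x =
        Derive (fun s => eval_expr x0 t0 beta lam w A s x) t
      + Derive (fun y => eval_expr x0 t0 beta lam w B t y) x
      + sumDC n (fun r s m =>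
          dC n r s m * (lx x0 t0 beta lam t x) ^ r * (lxx x0 t0 beta lam t x) ^ s
            * dxn m (dt w) t x * dxn (m + 1) w t x)) /\
    ((n <= 6)%nat -> forall t x : R,
      dt w t x * I2 n x0 t0 beta lam w t x =
        Derive (fun s => eval_expr x0 t0 beta lam w A s x) t
      + Derive (fun y => eval_expr x0 t0 beta lam w B t y) x).
Proof.
  intros Hn _ _ Hw.
  destruct (mainEqv n x0 t0 beta lam w Hn Hw) as [A [B HAB]].
  exists A, B. split.
  - exact HAB.
  - intros H6 t x. rewrite HAB. rewrite sumDC_small by exact H6. apply Rplus_0_r.
Qed.
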